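(* Let $F$ be a finite abelian group with cardinality $|F|\ge3$. Then $\lambda(F)\le\frac1{|F|}\log(|F|-1)$.
   Context: For a compact abelian group $G$ with normalized Haar measure $\mu$ (for finite $G$, the uniform probability measure) and (multiplicative) dual group of characters $\widehat{G}$, let $\mathbb{Z}[\widehat{G}]$ denote the ring of integral linear combinations of characters, regarded as functions on $G$. For $f\in\mathbb{Z}[\widehat{G}]$, the logarithmic Mahler measure over $G$ is $\mathsf{m}_G(f)=\int_G\log|f|\,d\mu$ (with $\log 0=-\infty$). The Lehmer constant of $G$ is $\lambda(G)=\inf\{\mathsf{m}_G(f): f\in\mathbb{Z}[\widehat{G}],\ \mathsf{m}_G(f)>0\}$. *)

(* Defs.v *)
From HB Require Import structures.
From mathcomp Require Import all_boot all_order all_algebra all_fingroup.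
From mathcomp Require Import all_classical all_reals.
From mathcomp Require Import ereal exp.
From mathcomp Require Import complex.

Set Implicit Arguments.
Unset Strict Implicit.
Unset Printing Implicit Defensive.

Import Order.TTheory GRing.Theory Num.Theory.
Local Open Scope ring_scope.

Section Lehmer.
Variables (R : realType) (gT : finGroupType).

Definition is_character (chi : gT -> R[i]) : Prop :=
  (forall x y : gT, chi (x * y)%g = chi x * chi y) /\ (forall x : gT, chi x != 0).

(* Z[\hat G]: integral linear combinations of characters, as functions on gT. *)
Definition in_ZGhat (f : gT -> R[i]) : Prop :=
  exists s : seq (int * (gT -> R[i])),
    (forall p, p \in s -> is_character p.2) /\
    (forall x : gT, f x = \sum_(p <- s) (p.1)%:~R * p.2 x).

Definition lnE (r : R) : \bar R := if r == 0 then -oo%E else (ln r)%:E.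

(* logarithmic Mahler measure w.r.t. the uniform probability on gT *)
Definition mahler (f : gT -> R[i]) : \bar R :=
  ((#|gT|%:R)^-1%:E * \sum_(x : gT) lnE (Normc.normc (f x)))%E.

Definition lehmer_const : \bar R :=
  ereal_inf [set m : \bar R | exists f, in_ZGhat f /\ mahler f = m /\ (0 < m)%E].

End Lehmer.

(* Main.v *)
Require Import Defs.
From HB Require Import structures.
From mathcomp Require Import all_boot all_order all_algebra all_fingroup all_solvable all_field all_character.
From mathcomp Require Import all_classical all_reals.
From mathcomp Require Import ereal exp.
From mathcomp Require Import complex.
From mathcomp Require Import lra.
Import Order.TTheory GRing.Theory Num.Theory.
Local Open Scope ring_scope.

Lemma prim_root_ex (F : numClosedFieldType) n : (n > 0)%N -> exists z : F, n.-primitive_root z.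
Proof.
pose p : {poly F} := 'X^n - 1; have [r Dp] := closed_field_poly_normal p.
move=> n_gt0; rewrite (monicP _) ?monicXnsubC // scale1r in Dp.
have rn1: all n.-unity_root r by apply/allP=> z; rewrite -root_prod_XsubC -Dp.
have sz_r: (n < (size r).+1)%N.
  by rewrite -(size_prod_XsubC r id) -Dp size_XnsubC.
have [|z] := hasP (has_prim_root n_gt0 rn1 _ sz_r); last by exists z.
by rewrite -separable_prod_XsubC -Dp separable_Xn_sub_1 // pnatr_eq0 -lt0n.
Qed.

Lemma prim_transfer (F1 F2 : idomainType) n (z : F1) (w : F2) a b :
  n.-primitive_root z -> n.-primitive_root w -> (z ^+ a == z ^+ b) = (w ^+ a == w ^+ b).
Proof. by move=> pz pw; rewrite (eq_prim_root_expr pz) (eq_prim_root_expr pw). Qed.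

Section Dual.
Variables (R : realType) (gT : finGroupType).
Hypothesis abG : abelian [set: gT].
Let G := [set: gT]%G.
Let N := #|gT|.
Let N_gt0 : (0 < N)%N. Proof. by rewrite /N -cardsT (cardG_gt0 G). Qed.
Let linG i : 'chi[G]_i \is a linear_char. Proof. exact: (char_abelianP G abG). Qed.

Lemma chi_unity i x : ('chi[G]_i x) ^+ N = 1.
Proof.
rewrite -lin_charX ?inE //.
by rewrite /N -cardsT expg_cardG ?inE // lin_char1.
Qed.

Let z : algC := xchoose (@prim_root_ex algC N N_gt0).
Let pz : N.-primitive_root z := xchooseP (@prim_root_ex algC N N_gt0).
Let w : R[i] := xchoose (@prim_root_ex R[i] N N_gt0).
Let pw : N.-primitive_root w := xchooseP (@prim_root_ex R[i] N N_gt0).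

Let kk i x : nat := sval (prim_rootP pz (chi_unity i x)).
Let kkE i x : 'chi[G]_i x = z ^+ kk i x.
Proof. exact: (svalP (prim_rootP pz (chi_unity i x))). Qed.

Definition chi' i x : R[i] := w ^+ kk i x.

Let tr a b : (z ^+ a == z ^+ b) = (w ^+ a == w ^+ b).
Proof. exact: prim_transfer pz pw. Qed.

Lemma chi'M i x y : chi' i (x * y)%g = chi' i x * chi' i y.
Proof.
apply/eqP; rewrite /chi' -exprD -tr exprD -!kkE lin_charM ?inE //.
Qed.

Lemma chi'_neq0 i x : chi' i x != 0.
Proof.
rewrite /chi' expf_neq0 //; apply/eqP => w0.
by have := prim_expr_order pw; rewrite w0 expr0n; case: N N_gt0 => // n _ /eqP; rewrite eq_sym oner_eq0.
Qed.

Lemma chi'1 i : chi' i 1%g = 1.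
Proof. by apply/eqP; rewrite /chi' -(expr0 w) -tr expr0 -kkE lin_char1. Qed.

Let mulEx i j : exists l, 'chi[G]_i * 'chi_j == 'chi_l.
Proof.
have /irrP[l e] : 'chi[G]_i * 'chi_j \in irr G by apply/lin_char_irr; rewrite rpredM.
by exists l; rewrite e.
Qed.

Let mulI i j := xchoose (mulEx i j).
Let mulIE i j x : 'chi[G]_(mulI i j) x = 'chi_i x * 'chi_j x.
Proof. by rewrite -(eqP (xchooseP (mulEx i j))) cfunE. Qed.

Lemma chi'_mul i j x : chi' (mulI i j) x = chi' i x * chi' j x.
Proof. by apply/eqP; rewrite /chi' -exprD -tr exprD -!kkE mulIE. Qed.

Lemma mulI_inj i : injective (mulI i).
Proof.
move=> j1 j2 e; apply: irr_inj; apply/cfunP => x.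
have nz : 'chi[G]_i x != 0 by rewrite lin_char_neq0 ?inE.
by have := mulIE i j1 x; rewrite e mulIE => /(mulfI nz) ->.
Qed.

Let NirrG : Nirr G = N.
Proof. by rewrite NirrE; move: abG; rewrite card_classes_abelian => /eqP ->; rewrite cardsT. Qed.

Lemma separ x : x != 1%g -> exists i, 'chi[G]_i x != 1.
Proof.
move=> nx; apply/existsP; apply: contraLR isT; rewrite negb_exists => /forallP all1.
have : (cfReg G) x = 0 by rewrite cfRegE (negPf nx).
rewrite cfReg_sum sum_cfunE (eq_bigr (fun _ => 1)); last first.
  by move=> i _; rewrite cfunE lin_char1 // mul1r; move/negPn: (all1 i) => /eqP.
rewrite sumr_const card_ord => /eqP; rewrite pnatr_eq0 => /eqP h; by move: N_gt0; rewrite -NirrG h.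
Qed.

Lemma sum_chi'1 : \sum_j chi' j 1%g = N%:R.
Proof.
rewrite (eq_bigr (fun _ => 1)) => [|j _]; last exact: chi'1.
by rewrite sumr_const card_ord NirrG.
Qed.

Lemma sum_chi'_ne x : x != 1%g -> \sum_j chi' j x = 0.
Proof.
move=> nx; have [i ni] := separ x nx.
have ni' : chi' i x != 1 by rewrite /chi' -(expr0 w) -tr expr0 -kkE.
have : chi' i x * (\sum_j chi' j x) = \sum_j chi' j x.
  rewrite mulr_sumr (eq_bigr (fun j => chi' (mulI i j) x)) => [|j _]; last by rewrite chi'_mul.
  by rewrite [RHS](reindex_inj (mulI_inj i)).
move/eqP; rewrite -subr_eq0 -{2}(mul1r (\sum_j _)) -mulrBl mulf_eq0 subr_eq0 (negPf ni').
by move=> /= /eqP.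
Qed.

End Dual.

Theorem lemma4p4 (R : realType) (gT : finGroupType) :
  abelian [set: gT] -> (3 <= #|gT|)%N ->
  (lehmer_const R gT <= ((#|gT|%:R)^-1 * ln (#|gT|%:R - 1))%:E)%E.
Proof.
move=> abG n3.
set n := #|gT|.
pose c := @chi' R gT abG.
pose s := [seq (1%:Z, c j) | j <- enum (Iirr [set: gT]%G)] ++ [:: ((-1 : int), fun _ : gT => 1 : R[i])].
pose f x := \sum_(p <- s) (p.1)%:~R * p.2 x.
have fE x : f x = \sum_j c j x - 1.
  rewrite /f big_cat /= big_map big_enum big_cons big_nil /= addr0.
  by congr (_ + _); [apply: eq_bigr => j _; rewrite mul1r | rewrite mulr1].
have inZ : in_ZGhat f.
  exists s; split => // p; rewrite mem_cat => /orP[/mapP[j _ ->]|].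
    by split => [x y|x]; [exact: chi'M | exact: chi'_neq0].
  rewrite inE => /eqP -> /=; split => [x y|x]; first by rewrite mulr1.
  exact: oner_neq0.
have f1 : f 1%g = 1 *+ (n - 1).
  by rewrite fE sum_chi'1 natrB ?mulr1n // (leq_trans _ n3).
have fx x : x != 1%g -> f x = - 1.
  by move=> nx; rewrite fE sum_chi'_ne // sub0r.
have pos : (0 < (n%:R)^-1 * ln (n%:R - 1 : R))%R.
  rewrite mulr_gt0 // ?invr_gt0 ?ltr0n ?(leq_trans _ n3) // ln_gt0 //.
  have h3 : (3%:R <= n%:R :> R) by rewrite ler_nat.
  lra.
have mf : mahler f = ((n%:R)^-1 * ln (n%:R - 1 : R))%:E.
  rewrite /mahler (bigD1 1%g) //= big1 => [|x nx]; last first.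
    by rewrite fx // normcN Normc.normc1 /lnE oner_eq0 ln1.
  rewrite f1 normcMn Normc.normc1 /lnE adde0.
  rewrite natrB ?(leq_trans _ n3) // mulr1n.
  have -> : (n%:R - 1 == 0 :> R) = false.
    apply/negbTE; rewrite subr_eq0 pnatr_eq1; apply/eqP => h; by move: n3; rewrite -/n h.
  by rewrite -EFinM.
apply: ereal_inf_lbound; exists f; split; [exact: inZ | split; [exact: mf | by rewrite lte_fin]].
Qed.
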